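(* Let $L_1,L_2\in\mathcal L_n$. Then $L_1\preceq_B L_2$ if and only if $H(L_1)-H(L_2)$ is a (possibly empty) sum of contiguous positive T-blocks. Moreover, if $L_1$ is obtained from $L_2$ by a single contiguous decreasing intercalate switch of consecutive integers, i.e. there are $i,j\in[n-1]$ and $a\in[n-1]$ with $(L_2)_{i,j}=(L_2)_{i+1,j+1}=a+1$, $(L_2)_{i,j+1}=(L_2)_{i+1,j}=a$, while $(L_1)_{i,j}=(L_1)_{i+1,j+1}=a$, $(L_1)_{i,j+1}=(L_1)_{i+1,j}=a+1$ and $L_1,L_2$ agree in all other cells, then $L_2$ covers $L_1$ in $(\mathcal L_n,\preceq_B)$.
   Context: Let $[n]=\{1,\dots,n\}$. A Latin square of order $n$ is an $n\times n$ array with entries in $[n]$ in which each symbol occurs exactly once in each row and each column; $\mathcal L_n$ is the set of them. A hypermatrix of order $n$ is an integer array $A=(A_{i,j,k})_{i,j,k\in[n]}$. For $L\in\mathcal L_n$, $H(L)$ is the hypermatrix with $H(L)_{i,j,k}=1$ if $L_{i,j}=k$ and $0$ otherwise. For $i_1<i_2$, $j_1<j_2$, $k_1<k_2$ in $[n]$, the positive T-block on $\{i_1,i_2\}\times\{j_1,j_2\}\times\{k_1,k_2\}$ is the hypermatrix that is zero outside these eight positions, with entries $+1$ at $(i_1,j_1,k_1),(i_2,j_2,k_1),(i_1,j_2,k_2),(i_2,j_1,k_2)$ and $-1$ at $(i_1,j_2,k_1),(i_2,j_1,k_1),(i_1,j_1,k_2),(i_2,j_2,k_2)$; it is contiguous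 if $i_2=i_1+1$, $j_2=j_1+1$, $k_2=k_1+1$. For hypermatrices $A,B$ of order $n$, $A\preceq_B B$ means $A-B$ is a (possibly empty) sum of positive T-blocks (the Bruhat order); for Latin squares, $L_1\preceq_B L_2$ means $H(L_1)\preceq_B H(L_2)$. An element $y$ covers $x$ if $x\prec y$ and no $z$ satisfies $x\prec z\prec y$. *)

(* Defs.v *)
(* Indices [n] = {1..n} are represented by 'I_n = {0..n-1}. *)
From mathcomp Require Import all_boot all_order all_algebra.
Set Implicit Arguments. Unset Strict Implicit. Unset Printing Implicit Defensive.
Import Order.TTheory GRing.Theory Num.Theory.
Local Open Scope ring_scope.

Definition is_latin (n : nat) (L : 'M['I_n]_n) : Prop :=
  (forall (i k : 'I_n), exists! j : 'I_n, L i j = k) /\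
  (forall (j k : 'I_n), exists! i : 'I_n, L i j = k).

Definition hypermatrix (n : nat) := 'I_n -> 'I_n -> 'I_n -> int.

Definition hm_sub n (A B : hypermatrix n) : hypermatrix n :=
  fun i j k => A i j k - B i j k.

Definition H n (L : 'M['I_n]_n) : hypermatrix n :=
  fun i j k => if L i j == k then 1 else 0.

Record tdata (n : nat) := TData {
  ti1 : 'I_n; ti2 : 'I_n; tj1 : 'I_n; tj2 : 'I_n; tk1 : 'I_n; tk2 : 'I_n }.

Definition tvalid n (t : tdata n) : bool :=
  [&& (ti1 t < ti2 t)%N, (tj1 t < tj2 t)%N & (tk1 t < tk2 t)%N].

Definition tcontig n (t : tdata n) : bool :=
  [&& val (ti2 t) == (val (ti1 t)).+1, val (tj2 t) == (val (tj1 t)).+1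
    & val (tk2 t) == (val (tk1 t)).+1].

Definition tblock n (t : tdata n) : hypermatrix n :=
  fun i j k =>
    let p a b c := [&& i == a, j == b & k == c] in
    if [|| p (ti1 t) (tj1 t) (tk1 t), p (ti2 t) (tj2 t) (tk1 t),
           p (ti1 t) (tj2 t) (tk2 t) | p (ti2 t) (tj1 t) (tk2 t)] then 1
    else if [|| p (ti1 t) (tj2 t) (tk1 t), p (ti2 t) (tj1 t) (tk1 t),
                p (ti1 t) (tj1 t) (tk2 t) | p (ti2 t) (tj2 t) (tk2 t)] then -1
    else 0.

Definition sum_of_tblocks n (P : tdata n -> bool) (A : hypermatrix n) : Prop :=
  exists s : seq (tdata n), all P s /\
    forall i j k, A i j k = \sum_(t <- s) tblock t i j k.

Definition hm_bruhat n (A B : hypermatrix n) : Prop :=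
  sum_of_tblocks (@tvalid n) (hm_sub A B).

Definition latin_bruhat n (L1 L2 : 'M['I_n]_n) : Prop :=
  hm_bruhat (H L1) (H L2).

Definition latin_bruhat_lt n (L1 L2 : 'M['I_n]_n) : Prop :=
  latin_bruhat L1 L2 /\ L1 <> L2.

Definition latin_covers n (L1 L2 : 'M['I_n]_n) : Prop :=
  latin_bruhat_lt L1 L2 /\
  ~ (exists Z : 'M['I_n]_n, is_latin Z /\ latin_bruhat_lt L1 Z /\ latin_bruhat_lt Z L2).

(* Main.v *)
Require Import Defs.
From mathcomp Require Import all_boot all_order all_algebra.
From mathcomp Require Import zify ring lra.
Set Implicit Arguments. Unset Strict Implicit. Unset Printing Implicit Defensive.
Import Order.TTheory GRing.Theory Num.Theory.

Section Aux.
Local Open Scope ring_scope.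

Definition dd n (a b x : 'I_n) : int := (x == a)%:Z - (x == b)%:Z.

Lemma bool_prod (b1 b2 c1 c2 e1 e2 : bool) :
  ~~ (b1 && b2) -> ~~ (c1 && c2) -> ~~ (e1 && e2) ->
  (if [|| [&& b1, c1 & e1], [&& b2, c2 & e1], [&& b1, c2 & e2] | [&& b2, c1 & e2]] then 1
   else if [|| [&& b1, c2 & e1], [&& b2, c1 & e1], [&& b1, c1 & e2] | [&& b2, c2 & e2]] then -1
   else 0 : int) = (b1%:Z - b2%:Z) * (c1%:Z - c2%:Z) * (e1%:Z - e2%:Z).
Proof. by case: b1; case: b2; case: c1; case: c2; case: e1; case: e2. Qed.

Lemma ord_neq n (a b : 'I_n) : (a < b)%N -> forall x : 'I_n, ~~ ((x == a) && (x == b)).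
Proof. move=> ab x; apply/negP => /andP [/eqP e1 /eqP e2]; subst; by rewrite ltnn in ab. Qed.

Lemma tblock_prod n (t : tdata n) i j k : tvalid t ->
  tblock t i j k = dd (ti1 t) (ti2 t) i * dd (tj1 t) (tj2 t) j * dd (tk1 t) (tk2 t) k.
Proof.
case/and3P => hi hj hk; rewrite /tblock /dd.
by apply: bool_prod; apply: ord_neq.
Qed.

Definition tord n (d : 'I_n) (m : nat) : 'I_n := insubd d m.

Lemma tordE n (d : 'I_n) m : (m < n)%N -> val (tord d m) = m.
Proof. by move=> h; rewrite /tord val_insubd h. Qed.

Lemma tele n (d a b x : 'I_n) : (a < b)%N ->
  \sum_(m <- index_iota a b) dd (tord d m) (tord d m.+1) x = dd a b x.
Proof.
move=> ab; rewrite (telescope_sumr_eq (fun k => - ((val x == k)%:Z))) ?(ltnW ab) //.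
  by rewrite /dd opprK addrC.
move=> k /andP [h1 h2]; rewrite /dd.
have k1 : (k < n)%N by apply: ltn_trans h2 (ltn_ord b).
have k2 : (k.+1 < n)%N by apply: leq_ltn_trans h2 (ltn_ord b).
have E m : (m < n)%N -> (x == tord d m) = (val x == m) by move=> h; rewrite -(inj_eq val_inj) tordE.
rewrite !E //; ring.
Qed.

Lemma all_flat T (P : pred T) (ss : seq (seq T)) : all (all P) ss -> all P (flatten ss).
Proof. by elim: ss => //= s ss IH /andP [h1 h2]; rewrite all_cat h1 IH. Qed.

Definition dec n (t : tdata n) : seq (tdata n) :=
  let d := ti1 t in
  flatten [seq [seq TData (tord d m) (tord d m.+1) (tord d p) (tord d p.+1) (tord d q) (tord d q.+1)
                | p <- index_iota (tj1 t) (tj2 t), q <- index_iota (tk1 t) (tk2 t)]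
          | m <- index_iota (ti1 t) (ti2 t)].

Lemma dec_ok n (t : tdata n) : tvalid t -> all (fun u => tvalid u && tcontig u) (dec t).
Proof.
move=> v; case/and3P: (v) => hi hj hk.
apply: all_flat; rewrite all_map; apply/allP => m mM /=.
apply/all_allpairsP => p q pP qQ.
move: mM pP qQ; rewrite !mem_index_iota => /andP [m1 m2] /andP [p1 p2] /andP [q1 q2].
have lt a b (c : 'I_n) : (a < c)%N -> (b <= a)%N -> (a < n)%N.
  by move=> h _; apply: ltn_trans h (ltn_ord c).
have le a (c : 'I_n) : (a < c)%N -> (a.+1 < n)%N.
  by move=> h; apply: leq_ltn_trans h (ltn_ord c).
rewrite /tvalid /tcontig /= !tordE ?leqnn ?eqxx //;
  by [apply: (lt _ _ _ m2 m1) | apply: le m2 | apply: (lt _ _ _ p2 p1) | apply: le p2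
     | apply: (lt _ _ _ q2 q1) | apply: le q2].
Qed.

Lemma dec_sum n (t : tdata n) i j k : tvalid t ->
  \sum_(u <- dec t) tblock u i j k = tblock t i j k.
Proof.
move=> v; case/and3P: (v) => hi hj hk.
rewrite big_flatten /= big_map tblock_prod //.
rewrite -(tele (ti1 t) _ hi) -(tele (ti1 t) _ hj) -(tele (ti1 t) _ hk).
rewrite -mulrA mulr_suml; apply: eq_big_nat => m /andP [m1 m2].
rewrite big_allpairs_dep /= mulr_suml mulr_sumr; apply: eq_big_nat => p /andP [p1 p2].
rewrite mulr_sumr mulr_sumr; apply: eq_big_nat => q /andP [q1 q2].
have lt a (c : 'I_n) : (a < c)%N -> (a < n)%N.
  by move=> h; apply: ltn_trans h (ltn_ord c).
have le a (c : 'I_n) : (a < c)%N -> (a.+1 < n)%N.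
  by move=> h; apply: leq_ltn_trans h (ltn_ord c).
rewrite tblock_prod /= ?mulrA //.
by rewrite /tvalid /= !tordE ?leqnn //; by [apply: (lt _ _ m2) | apply: le m2 | apply: (lt _ _ p2) | apply: le p2
     | apply: (lt _ _ q2) | apply: le q2].
Qed.

Definition phi n (A : hypermatrix n) : int :=
  \sum_i \sum_j \sum_k A i j k * (- ((val i)%:Z * (val j)%:Z * (val k)%:Z)).

Lemma sum_dd n (a b : 'I_n) : \sum_x dd a b x * (val x)%:Z = (val a)%:Z - (val b)%:Z.
Proof.
rewrite /dd; under eq_bigr do rewrite mulrBl.
have E (c : 'I_n) : \sum_x (x == c)%:Z * (val x)%:Z = (val c)%:Z.
  rewrite (bigD1 c) //= eqxx mul1r big1 ?addr0 // => x /negbTE ->.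
  by rewrite mul0r.
by rewrite sumrB !E.
Qed.

Lemma triple n (F G K : 'I_n -> int) :
  \sum_i \sum_j \sum_k (F i * G j * K k) = (\sum_i F i) * (\sum_j G j) * (\sum_k K k).
Proof.
rewrite -mulrA mulr_suml; apply: eq_bigr => i _.
rewrite mulr_suml mulr_sumr; apply: eq_bigr => j _.
by rewrite mulr_sumr mulr_sumr; apply: eq_bigr => k _; rewrite mulrA.
Qed.

Lemma phi_ext n (A B : hypermatrix n) : (forall i j k, A i j k = B i j k) -> phi A = phi B.
Proof.
move=> e; rewrite /phi; apply: eq_bigr => i _; apply: eq_bigr => j _; apply: eq_bigr => k _.
by rewrite e.
Qed.

Lemma phi_add n (A B : hypermatrix n) :
  phi (fun i j k => A i j k + B i j k) = phi A + phi B.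
Proof.
rewrite /phi -big_split; apply: eq_bigr => i _; rewrite -big_split; apply: eq_bigr => j _.
by rewrite -big_split; apply: eq_bigr => k _; rewrite /= mulrDl.
Qed.

Lemma phi_sum n (s : seq (tdata n)) :
  phi (fun i j k => \sum_(t <- s) tblock t i j k) = \sum_(t <- s) phi (tblock t).
Proof.
elim: s => [|t s IH].
  rewrite big_nil /phi big1 // => i _; rewrite big1 // => j _; rewrite big1 // => k _.
  by rewrite big_nil mul0r.
rewrite big_cons -IH -phi_add; apply: phi_ext => i j k; by rewrite big_cons.
Qed.

Lemma phi_tblock n (t : tdata n) : tvalid t ->
  phi (tblock t) = - (((val (ti1 t))%:Z - (val (ti2 t))%:Z) *
                      ((val (tj1 t))%:Z - (val (tj2 t))%:Z) *
                      ((val (tk1 t))%:Z - (val (tk2 t))%:Z)).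
Proof.
move=> v; rewrite /phi.
have E i j k : tblock t i j k * (- ((val i)%:Z * (val j)%:Z * (val k)%:Z)) =
   (- (dd (ti1 t) (ti2 t) i * (val i)%:Z)) * (dd (tj1 t) (tj2 t) j * (val j)%:Z)
     * (dd (tk1 t) (tk2 t) k * (val k)%:Z).
  rewrite tblock_prod //; ring.
under eq_bigr do under eq_bigr do under eq_bigr do rewrite E.
by rewrite triple sumrN !sum_dd mulNr mulNr.
Qed.

Lemma phi_tblock_ge1 n (t : tdata n) : tvalid t -> 1 <= phi (tblock t).
Proof.
move=> v; rewrite phi_tblock //; case/and3P: v => hi hj hk.
set x := (val (ti1 t))%:Z; set y := (val (ti2 t))%:Z.
set u := (val (tj1 t))%:Z; set w := (val (tj2 t))%:Z.
set p := (val (tk1 t))%:Z; set q := (val (tk2 t))%:Z.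
have -> : - ((x - y) * (u - w) * (p - q)) = (y - x) * (w - u) * (q - p) by ring.
apply: mulr_ege1; first apply: mulr_ege1.
all: rewrite /x /y /u /w /p /q /=; lia.
Qed.

Lemma phi_blocks n (s : seq (tdata n)) : all (@tvalid n) s ->
  (size s)%:Z <= \sum_(t <- s) phi (tblock t).
Proof.
elim: s => [|t s IH] /=; first by rewrite big_nil.
case/andP => h1 h2; rewrite big_cons.
have := phi_tblock_ge1 h1; have := IH h2; move=> a b; rewrite -addn1 PoszD addrC; exact: lerD.
Qed.

Lemma all_dec n (s : seq (tdata n)) : all (@tvalid n) s ->
  all (fun u => tvalid u && tcontig u) (flatten (map (@dec n) s)).
Proof.
elim: s => [|t s IH] //= /andP [h1 h2]; by rewrite all_cat dec_ok // IH.
Qed.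

Lemma sum_dec n (s : seq (tdata n)) i j k : all (@tvalid n) s ->
  \sum_(u <- flatten (map (@dec n) s)) tblock u i j k = \sum_(t <- s) tblock t i j k.
Proof.
elim: s => [|t s IH] //= /andP [h1 h2]; by rewrite big_cat big_cons dec_sum // IH.
Qed.

End Aux.

Lemma ord_ne n (x y : 'I_n) : val y = (val x).+1 -> (x == y) = false /\ (y == x) = false.
Proof.
move=> e; split; apply/negbTE/negP => /eqP h; move: e; rewrite h; lia.
Qed.

Theorem mainTheorem2 (n : nat) (L1 L2 : 'M['I_n]_n) :
  is_latin L1 -> is_latin L2 ->
  (latin_bruhat L1 L2 <->
     sum_of_tblocks (fun t => tvalid t && tcontig t) (hm_sub (H L1) (H L2))) /\
  (forall i i' j j' a a' : 'I_n,
     val i' = (val i).+1 -> val j' = (val j).+1 -> val a' = (val a).+1 ->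
     L2 i j = a' -> L2 i' j' = a' -> L2 i j' = a -> L2 i' j = a ->
     L1 i j = a -> L1 i' j' = a -> L1 i j' = a' -> L1 i' j = a' ->
     (forall r c : 'I_n, ~~ ((r \in [:: i; i']) && (c \in [:: j; j'])) ->
        L1 r c = L2 r c) ->
     latin_covers L1 L2).
Proof.
move=> _ _; split.
  split.
    move=> [s [hs he]]; exists (flatten (map (@dec n) s)); split; first exact: all_dec.
    by move=> i j k; rewrite sum_dec // he.
  move=> [s [hs he]]; exists s; split => //.
  by apply: sub_all hs => t /andP [].
move=> i i' j j' a a' hi hj ha h2ij h2ij' h2ij2 h2i'j h1ij h1ij' h1ij2 h1i'j hout.
set t0 := TData i i' j j' a a'.
have v0 : tvalid t0 by rewrite /tvalid /= hi hj ha !ltnSn.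
have [ii1 ii2] := ord_ne hi; have [jj1 jj2] := ord_ne hj; have [aa1 aa2] := ord_ne ha.
have D : forall r c k, hm_sub (H L1) (H L2) r c k = tblock t0 r c k.
  move=> r c k; rewrite tblock_prod // /hm_sub /H /dd /=.
  case: (boolP ((r \in [:: i; i']) && (c \in [:: j; j']))) => [|hn]; last first.
    rewrite hout // subrr.
    case: (boolP (r \in [:: i; i'])) => hr.
      case: (boolP (c \in [:: j; j'])) => hc; first by move: hn; rewrite hr hc.
      by move: hc; rewrite !inE => /norP [/negbTE -> /negbTE ->]; rewrite subrr mulr0 mul0r.
    by move: hr; rewrite !inE => /norP [/negbTE -> /negbTE ->]; rewrite subrr !mul0r.
  rewrite !inE => /andP [/orP [] /eqP -> /orP [] /eqP ->];
    rewrite ?h2ij ?h2ij' ?h2ij2 ?h2i'j ?h1ij ?h1ij' ?h1ij2 ?h1i'j ?eqxx ?ii1 ?ii2 ?jj1 ?jj2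
      [a == k]eq_sym [a' == k]eq_sym;
    by case: (k == a); case: (k == a').
have ne : L1 <> L2.
  move=> e; move: h1ij; rewrite e h2ij => /eqP; by rewrite aa2.
split.
  split => //; exists [:: t0]; split; first by rewrite /= v0.
  by move=> r c k; rewrite big_seq1 D.
move=> [Z [_ [[[s1 [hs1 e1]] n1] [[s2 [hs2 e2]] n2]]]].
have P0 : phi (hm_sub (H L1) (H L2)) = 1.
  rewrite (phi_ext D) phi_tblock //= hi hj ha/=; lia.
have P1 : phi (hm_sub (H L1) (H L2)) = (phi (hm_sub (H L1) (H Z)) + phi (hm_sub (H Z) (H L2)))%R.
  rewrite -phi_add; apply: phi_ext => r c k; rewrite /hm_sub; ring.
have Q1 := phi_blocks hs1; have Q2 := phi_blocks hs2.
rewrite -phi_sum -(phi_ext e1) in Q1.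
rewrite -phi_sum -(phi_ext e2) in Q2.
case: s1 {hs1} e1 Q1 => [|t1 s1] e1 Q1.
  apply: n1; apply/matrixP => r c; have := e1 r c (L1 r c).
  rewrite /hm_sub /H eqxx big_nil; case: eqP => // _ /eqP; lia.
case: s2 {hs2} e2 Q2 => [|t2 s2] e2 Q2.
  apply: n2; apply/matrixP => r c; have := e2 r c (Z r c).
  rewrite /hm_sub /H eqxx big_nil; case: eqP => // _ /eqP; lia.
move: Q1 Q2 P1; rewrite P0 /=; lia.
Qed.
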